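(* Let $K\ge 1$ and $T\ge 2$ be integers and let $a_1,\dots,a_{T-1}$ be binary sequences of period $K$. Define the binary sequences $s=I(1_K,a_1,\dots,a_{T-1})$ and $s'=I(0_K,a_1,\dots,a_{T-1})$ of period $KT$. For $0\le \tau<KT$ write $\tau=\tau_1T+\tau_2$ with $0\le\tau_2\le T-1$. Then $$R_{s'}(\tau)=\begin{cases}R_s(\tau)&\text{if }\tau_2=0,\\ R_s(\tau)-2d(a_{\tau_2})-2d(a_{T-\tau_2})&\text{if }\tau_2\neq 0,\end{cases}$$ $$R_{s,s'}(\tau)=\begin{cases}TK-2K&\text{if }\tau=0,\\ R_s(\tau)-2K&\text{if }\tau_2=0,\ \tau\neq 0,\\ R_s(\tau)-2d(a_{T-\tau_2})&\text{otherwise},\end{cases}\qquad R_{s',s}(\tau)=\begin{cases}TK-2K&\text{if }\tau=0,\\ R_s(\tau)-2K&\text{if }\tau_2=0,\ \tau\neq 0,\\ R_s(\tau)-2d(a_{\tau_2})&\text{otherwise}.\end{cases}$$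
   Context: A binary sequence of period $n$ is a map $\mathbb{Z}\to\{0,1\}$ with period $n$ (indices are taken modulo $n$). For binary sequences $a,b$ of period $n$, the periodic correlation is $R_{a,b}(\tau)=\sum_{t=0}^{n-1}(-1)^{a(t)+b(t+\tau)}$ (with $t+\tau$ taken mod $n$), and $R_a(\tau)=R_{a,a}(\tau)$. For binary sequences $b_0,\dots,b_{T-1}$ of period $K$, the interleaved sequence $I(b_0,\dots,b_{T-1})$ is the binary sequence $v$ of period $KT$ defined by $v(iT+j)=b_j(i)$ for $0\le i\le K-1$, $0\le j\le T-1$. $0_K$ and $1_K$ denote the all-zero and all-one sequences of period $K$. For a binary sequence $a$ of period $K$, $d(a)=2|\{0\le t\le K-1: a(t)=1\}|-K$. *)

(* Defs.v *)
From mathcomp Require Import all_boot all_order all_algebra.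
Set Implicit Arguments. Unset Strict Implicit. Unset Printing Implicit Defensive.
Import GRing.Theory Num.Theory.
Local Open Scope ring_scope.

(* A binary sequence of period n is represented by a function nat -> bool;
   only its values at 0..n-1 matter (all indices are reduced mod n). *)
Definition binseq := nat -> bool.

Definition corr (n : nat) (a b : binseq) (tau : nat) : int :=
  \sum_(t < n) (-1) ^+ (a t + b ((t + tau) %% n))%N.

Definition acorr (n : nat) (a : binseq) (tau : nat) : int := corr n a a tau.

Definition interleave (K T : nat) (b : nat -> binseq) : binseq :=
  fun m => b (m %% T)%N ((m %/ T) %% K)%N.

Definition zeros : binseq := fun _ => false.
Definition ones : binseq := fun _ => true.

Definition dval (K : nat) (a : binseq) : int :=
  (2 * count a (iota 0 K))%:Z - K%:Z.

Definition cols (c0 : binseq) (a : nat -> binseq) : nat -> binseq :=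
  fun j => if j == 0%N then c0 else a j.

(* Main.v *)
Require Import Defs.
From mathcomp Require Import all_boot all_order all_algebra.
From mathcomp Require Import ring lra zify.
Import GRing.Theory Num.Theory.
Local Open Scope ring_scope.

Lemma sum_split (K T : nat) (F : nat -> int) :
  \sum_(t < K * T) F t = \sum_(i < K) \sum_(j < T) F (i * T + j)%N.
Proof.
rewrite -(big_mkord xpredT).
elim: K => [|K IH]; first by rewrite mul0n big_ord0 big_geq.
rewrite big_ord_recr /= -IH mulSn addnC (@big_cat_nat _ _ _ (K * T) 0 (K * T + T)) ?leq_addr //=.
congr (_ + _).
rewrite -{1}(add0n (K * T)%N) big_addn addKn big_mkord.
by apply: eq_bigr => j _; rewrite addnC.
Qed.

Lemma rot1 (K : nat) (g : nat -> int) :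
  \sum_(i < K) g ((i + 1) %% K)%N = \sum_(i < K) g i.
Proof.
case: K => [|K]; first by rewrite !big_ord0.
rewrite big_ord_recr big_ord_recl /= addn1 modnn addrC; congr (_ + _).
apply: eq_bigr => i _; rewrite modn_small ?addn1 ?ltnS //=.
Qed.

Lemma sum_rot (K m : nat) (f : nat -> int) :
  \sum_(i < K) f ((i + m) %% K)%N = \sum_(i < K) f i.
Proof.
elim: m => [|m IH].
  by apply: eq_bigr => i _; rewrite addn0 modn_small.
rewrite -IH -(rot1 K (fun i => f ((i + m) %% K)%N)).
by apply: eq_bigr => i _; rewrite modnDml -addnA add1n addnS.
Qed.

Lemma sum_sign_d (K : nat) (b : binseq) :
  \sum_(i < K) (-1) ^+ (b i : nat) = - dval K b.
Proof.
rewrite /dval; elim: K => [|K IH]; first by rewrite big_ord0 /=.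
rewrite big_ord_recr IH (_ : iota 0 K.+1 = iota 0 K ++ [:: K]); last by rewrite -addn1 iotaD.
rewrite count_cat /= addn0.
case: (b K) => /=; rewrite ?expr0 ?expr1; lia.
Qed.

Lemma sum_delta (T j0 : nat) (G : nat -> int) : (j0 < T)%N ->
  \sum_(j < T) (if (j : nat) == j0 then 2 else 0) * G j = 2 * G j0.
Proof.
move=> h; rewrite (bigD1 (Ordinal h)) //= eqxx big1 ?addr0 // => j hj.
rewrite ifN ?mul0r //; apply: contraNN hj => /eqP e; apply/eqP; exact: val_inj.
Qed.

Lemma mod_KT (K T m : nat) : (0 < T)%N ->
  ((m %% (K * T)) %% T = m %% T)%N /\ (((m %% (K * T)) %/ T) %% K = (m %/ T) %% K)%N.
Proof.
move=> hT; split; first by rewrite modn_dvdm // dvdn_mull.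
by rewrite {2}(divn_eq m (K * T)) mulnA divnMDl // modnMDl.
Qed.

Lemma corr_il (K T : nat) (c c2 : nat -> binseq) (tau : nat) : (0 < T)%N ->
  corr (K * T) (interleave K T c) (interleave K T c2) tau =
  \sum_(i < K) \sum_(j < T) (-1) ^+ (c j i : nat) *
     (-1) ^+ (c2 ((j + tau %% T) %% T)%N ((i + tau %/ T + (j + tau %% T) %/ T) %% K)%N : nat).
Proof.
move=> hT; rewrite /corr (sum_split K T (fun t => (-1) ^+ (interleave K T c t + interleave K T c2 ((t + tau) %% (K * T)))%N)); apply: eq_bigr => i _; apply: eq_bigr => j _.
rewrite exprD /interleave.
have [h1 h2] := @mod_KT K T (i * T + j + tau) hT; rewrite h1 h2.
have -> : (i * T + j + tau = (i + tau %/ T) * T + (j + tau %% T))%N.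
  rewrite {1}(divn_eq tau T); lia.
rewrite modnMDl divnMDl // modnMDl divnMDl // modn_small // divn_small // addn0 modn_small //.
Qed.
Lemma jeq (T t2 j : nat) : (t2 < T)%N -> (j < T)%N ->
  (((j + t2) %% T == 0) = (j == (T - t2) %% T))%N.
Proof.
move=> h1 h2; case: (posnP t2) => [->|ht].
  by rewrite addn0 subn0 modnn modn_small.
rewrite (modn_small (_ : T - t2 < T)%N); last lia.
case: (ltnP (j + t2) T) => hj.
  rewrite modn_small //; apply/eqP/eqP; lia.
have -> : (j + t2 = (j + t2 - T) + T)%N by lia.
rewrite modnDr modn_small; last lia.
apply/eqP/eqP; lia.
Qed.

Lemma expand (K T t1 t2 : nat) (E Ep : nat -> nat -> int)
  (hEp : forall j i, Ep j i = E j i + (if j == 0%N then 2 else 0)) (ht2 : (t2 < T)%N) :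
  let J j := ((j + t2) %% T)%N in let I i j := ((i + t1 + (j + t2) %/ T) %% K)%N in
  let S (X Y : nat -> nat -> int) := \sum_(i < K) \sum_(j < T) X j i * Y (J j) (I i j) in
  let A := \sum_(i < K) E t2 i in let B := \sum_(i < K) E ((T - t2) %% T)%N i in
  [/\ S Ep Ep = S E E + 2 * A + 2 * B + 4 * (if t2 == 0%N then K%:Z else 0),
      S E Ep = S E E + 2 * B & S Ep E = S E E + 2 * A].
Proof.
move=> J I S A B.
have hT0 : (0 < T)%N by lia.
have sA : \sum_(i < K) \sum_(j < T) (if (j : nat) == 0%N then 2 else 0) * E (J j) (I i j) = 2 * A.
  under eq_bigr => i _ do rewrite (@sum_delta T 0 (fun j => E (J j) (I i j)) hT0).
  rewrite -mulr_sumr /A /J /I add0n modn_small // (divn_small ht2).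
  by rewrite -(sum_rot K t1 (E t2)); congr (_ * _); apply: eq_bigr => i _; rewrite addn0.
have sB : \sum_(i < K) \sum_(j < T) (if (J j) == 0%N then 2 else 0) * E j i = 2 * B.
  under eq_bigr => i _ do under eq_bigr => j _ do rewrite /J (@jeq T t2 j ht2 (ltn_ord j)) //.
  under eq_bigr => i _ do rewrite (@sum_delta T _ (fun j => E j i) (ltn_pmod _ hT0)).
  by rewrite -mulr_sumr.
have sC : \sum_(i < K) \sum_(j < T) (if (j : nat) == 0%N then 2 else 0) * (if (J j) == 0%N then 2 else 0)
   = 4 * (if t2 == 0%N then K%:Z else 0).
  under eq_bigr => i _ do rewrite (@sum_delta T 0 (fun j => if (J j) == 0%N then 2 else 0) hT0).
  rewrite sumr_const card_ord /J add0n modn_small //.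
  case: eqP => _; lia.
split.
- rewrite -sA -sB -sC /S -!big_split /=; apply: eq_bigr => i _.
  rewrite -!big_split /=; apply: eq_bigr => j _; rewrite !hEp; ring.
- rewrite -sB /S -!big_split /=; apply: eq_bigr => i _.
  rewrite -!big_split /=; apply: eq_bigr => j _; rewrite !hEp; ring.
- rewrite -sA /S -!big_split /=; apply: eq_bigr => i _.
  rewrite -!big_split /=; apply: eq_bigr => j _; rewrite !hEp; ring.
Qed.
Theorem theorem2 (K T : nat) (hK : (1 <= K)%N) (hT : (2 <= T)%N)
  (a : nat -> binseq) (tau : nat) (htau : (tau < K * T)%N) :
  let s := interleave K T (cols ones a) in
  let s' := interleave K T (cols zeros a) in
  let tau2 := (tau %% T)%N in
  (acorr (K * T) s' tau =
     if tau2 == 0%N then acorr (K * T) s tau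
     else acorr (K * T) s tau - 2 * dval K (a tau2) - 2 * dval K (a (T - tau2)%N))
  /\
  (corr (K * T) s s' tau =
     if tau == 0%N then (T * K)%:Z - (2 * K)%:Z
     else if tau2 == 0%N then acorr (K * T) s tau - (2 * K)%:Z
     else acorr (K * T) s tau - 2 * dval K (a (T - tau2)%N))
  /\
  (corr (K * T) s' s tau =
     if tau == 0%N then (T * K)%:Z - (2 * K)%:Z
     else if tau2 == 0%N then acorr (K * T) s tau - (2 * K)%:Z
     else acorr (K * T) s tau - 2 * dval K (a tau2)).
Proof.
move=> s s' tau2.
have hT0 : (0 < T)%N by lia.
have ht2 : (tau %% T < T)%N by rewrite ltn_mod.
have hEp : forall j i, (fun j i => (-1) ^+ (cols zeros a j i : nat)) j i
   = (fun j i => (-1) ^+ (cols ones a j i : nat) : int) j i + (if j == 0%N then 2 else 0).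
  move=> j i /=; rewrite /cols; case: (j == 0%N) => //=; by rewrite addr0.
have := @expand K T (tau %/ T) (tau %% T) _ _ hEp ht2.
move=> /= [e1 e2 e3].
have hs0 : tau = 0%N -> corr (K * T) s s tau = (K * T)%:Z.
  move=> ->; rewrite /corr.
  have sq : forall b : bool, (-1 : int) ^+ (b + b)%N = 1 by case.
  under eq_bigr => t _ do rewrite addn0 modn_small // sq.
  by rewrite sumr_const card_ord; lia.
rewrite /acorr /s /s' !corr_il // e1 e2 e3.
rewrite /s !corr_il // in hs0.
have hA : \sum_(i < K) (-1) ^+ (cols ones a (tau %% T)%N i : nat)
    = if ((tau %% T)%N == 0%N) then - (K%:Z) else - dval K (a (tau %% T)%N).
  case: eqP => h.
    rewrite h; under eq_bigr => i _ do rewrite /cols /= expr1.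
    by rewrite sumr_const card_ord; lia.
  rewrite -sum_sign_d; apply: eq_bigr => i _; rewrite /cols ifN //; exact/eqP.
have hB : \sum_(i < K) (-1) ^+ (cols ones a ((T - tau %% T) %% T)%N i : nat)
    = if ((tau %% T)%N == 0%N) then - (K%:Z) else - dval K (a (T - tau %% T)%N).
  case: eqP => h.
    rewrite h subn0 modnn; under eq_bigr => i _ do rewrite /cols /= expr1.
    by rewrite sumr_const card_ord; lia.
  rewrite modn_small; last lia.
  rewrite -sum_sign_d; apply: eq_bigr => i _; rewrite /cols ifN //; apply/eqP; lia.
rewrite hA hB /tau2.
set X := \sum_(i < K) \sum_(j < T) _ in hs0 *.
clearbody X.
have H2 : tau = 0%N -> (tau %% T)%N = 0%N by move->; rewrite mod0n.
case: (tau =P 0%N) => h0; case: ((tau %% T)%N =P 0%N) => h1.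
- have := hs0 h0; rewrite mulnC; lia.
- by have := H2 h0.
- lia.
- lia.
Qed.
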